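(* Let $Z$ be a uniform read-$d$-times NBP and let $P_1,P_2$ be two directed paths of $Z$ having the same initial vertex and the same final vertex. Then a variable labels some edge of $P_1$ if and only if it labels some edge of $P_2$.
   Context: An NBP $Z$ is a directed acyclic multigraph with one source and one sink, some of whose edges are labelled with literals. $Z$ is read-$d$-times if each variable labels at most $d$ edges on each source-sink path, and uniform if each variable (of those labelling edges of $Z$) labels exactly $d$ edges on each source-sink path. *)

(* Defs.v *)
From mathcomp Require Import all_boot.
Set Implicit Arguments. Unset Strict Implicit. Unset Printing Implicit Defensive.

(* Edge labels: [lab e = None] means
   unlabelled, [lab e = Some (x, b)] means labelled by the literal x (b = true)
   or ~x (b = false), for a variable x : X. *)

Section NBP.
Variables (V E : finType) (X : eqType).
Variables (src tgt : E -> V) (lab : E -> option (X * bool)).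

Fixpoint walk (u v : V) (es : seq E) : bool :=
  match es with
  | [::] => u == v
  | e :: es' => (src e == u) && walk (tgt e) v es'
  end.

Definition labels_var (x : X) (e : E) : bool :=
  if lab e is Some (y, _) then y == x else false.

Definition occ (x : X) (es : seq E) : nat := count (labels_var x) es.

Definition acyclic : Prop := forall v es, walk v v es -> es = [::].

Definition is_NBP (s t : V) : Prop :=
  [/\ acyclic,
      (forall v, (forall e, tgt e != v) <-> v = s) &
      (forall v, (forall e, src e != v) <-> v = t)].

Definition read_d_times (d : nat) (s t : V) : Prop :=
  forall es, walk s t es -> forall x, occ x es <= d.

Definition uniform (d : nat) (s t : V) : Prop :=
  forall x, (exists e, labels_var x e) ->
  forall es, walk s t es -> occ x es = d.

End NBP.

(* Main.v *)
Require Import Defs.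
From mathcomp Require Import all_boot.
From Stdlib Require Import ClassicalEpsilon Lia.
From mathcomp Require Import zify.

Definition dec (P : Prop) : bool := if excluded_middle_informative P then true else false.
Lemma decP (P : Prop) : reflect P (dec P).
Proof. rewrite /dec; case: excluded_middle_informative => h; constructor => //. Qed.

Section L.
Variables (V E : finType) (X : eqType) (src tgt : E -> V).

Lemma walk_cat u v w p q : walk src tgt u v p -> walk src tgt v w q ->
  walk src tgt u w (p ++ q).
Proof.
elim: p u => [|e p IH] u /=; first by move/eqP->.
by case/andP=> -> h1 h2; rewrite /= IH.
Qed.

Hypothesis acyc : acyclic src tgt.

Definition Rb (a : V) : {set V} :=
  [set b | dec (exists p, p <> [::] /\ walk src tgt b a p)].
Definition Rf (a : V) : {set V} :=
  [set b | dec (exists p, p <> [::] /\ walk src tgt a b p)].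

Lemma back_ex (s : V) : (forall v, (forall e, tgt e != v) <-> v = s) ->
  forall n a, #|Rb a| <= n -> exists p, walk src tgt s a p.
Proof.
move=> Hs; elim=> [|n IH] a Ha;
  (case h: [forall e, tgt e != a];
    [by exists [::]; rewrite /= (proj1 (Hs a) (fun e => (forallP h) e)) |]);
  move/negbT: h; rewrite negb_forall => /existsP [e]; rewrite negbK => /eqP te;
  (have pr : Rb (src e) \proper Rb a;
  [ apply/properP; split;
    [ apply/subsetP => b; rewrite !inE => /decP [p [_ hp]]; apply/decP;
      exists (p ++ [:: e]); split; [by case: p {hp} |];
      by apply: walk_cat hp _; rewrite /= eqxx te /=
    | exists (src e);
      [ by rewrite inE; apply/decP; exists [:: e]; split => //=; rewrite eqxx te /=
      | rewrite inE; apply/negP => /decP [p [pn hp]]; exact: pn (acyc _ _ hp) ] ] |]);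
  have := proper_card pr => lt.
- by have := leq_trans lt Ha.
- have [q hq] := IH (src e) (leq_trans lt Ha).
  exists (q ++ [:: e]); apply: walk_cat hq _; by rewrite /= eqxx te /=.
Qed.

Lemma fwd_ex (t : V) : (forall v, (forall e, src e != v) <-> v = t) ->
  forall n a, #|Rf a| <= n -> exists p, walk src tgt a t p.
Proof.
move=> Hs; elim=> [|n IH] a Ha;
  (case h: [forall e, src e != a];
    [by exists [::]; rewrite /= (proj1 (Hs a) (fun e => (forallP h) e)) |]);
  move/negbT: h; rewrite negb_forall => /existsP [e]; rewrite negbK => /eqP te;
  (have pr : Rf (tgt e) \proper Rf a;
  [ apply/properP; split;
    [ apply/subsetP => b; rewrite !inE => /decP [p [_ hp]]; apply/decP;
      exists (e :: p); split; [by [] |];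
      by rewrite /= te eqxx
    | exists (tgt e);
      [ by rewrite inE; apply/decP; exists [:: e]; split => //=; rewrite te !eqxx
      | rewrite inE; apply/negP => /decP [p [pn hp]]; exact: pn (acyc _ _ hp) ] ] |]);
  have := proper_card pr => lt.
- by have := leq_trans lt Ha.
- have [q hq] := IH (tgt e) (leq_trans lt Ha).
  by exists (e :: q); rewrite /= te eqxx.
Qed.
End L.

Theorem lemma2 (V E : finType) (X : eqType) (src tgt : E -> V)
  (lab : E -> option (X * bool)) (s t : V) (d : nat) :
  is_NBP src tgt s t ->
  read_d_times src tgt lab d s t ->
  uniform src tgt lab d s t ->
  forall (u v : V) (P1 P2 : seq E),
    walk src tgt u v P1 -> walk src tgt u v P2 ->
    forall x : X,
      (exists2 e, e \in P1 & labels_var lab x e) <->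
      (exists2 e, e \in P2 & labels_var lab x e).
Proof.
move=> [ac Hs Ht] _ Hu u v P1 P2 w1 w2 x.
have [a wa] := @back_ex V E src tgt ac s Hs _ u (leqnn _).
have [b wb] := @fwd_ex V E src tgt ac t Ht _ v (leqnn _).
have key : forall Q R, walk src tgt u v Q -> walk src tgt u v R ->
  (exists2 e, e \in Q & labels_var lab x e) ->
  (exists2 e, e \in R & labels_var lab x e).
  move=> Q R wQ wR [e eQ le].
  have ex : exists e, labels_var lab x e by exists e.
  have h1 := Hu x ex _ (@walk_cat _ _ _ _ _ _ _ _ _ wa (@walk_cat _ _ _ _ _ _ _ _ _ wQ wb)).
  have h2 := Hu x ex _ (@walk_cat _ _ _ _ _ _ _ _ _ wa (@walk_cat _ _ _ _ _ _ _ _ _ wR wb)).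
  move: h1 h2; rewrite /occ !count_cat => h1 h2.
  have : count (labels_var lab x) Q = count (labels_var lab x) R by lia.
  have : 0 < count (labels_var lab x) Q.
    by rewrite -has_count; apply/hasP; exists e.
  move=> pos eq; rewrite eq -has_count in pos.
  by move/hasP: pos.
by split; apply: key.
Qed.
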